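(* Let $d\ge1$, let $|\cdot|$ be any norm on $\mathbb{R}^d$, let $p\in(0,+\infty)$ and let $X$ be an $\mathbb{R}^d$-valued random vector with distribution $\mu$ such that $\int_{\mathbb{R}^d}|\xi|^p\mu(d\xi)<+\infty$. Let $(a_N)_{N\ge1}$ be an $L^p$-optimal greedy quantization sequence for $X$. Assume that there exists $b\in(0,\tfrac12)$ such that the $b$-maximal function $\Psi_b$ associated with $(a_N)_{N\ge1}$ satisfies $\int_{\mathbb{R}^d}\Psi_b^{\frac{p}{p+d}}\,d\mu<+\infty$. Then $$\limsup_{N\to+\infty}N^{\frac1d}\,e_p(a^{(N)},X)<+\infty.$$
   Context: For $\Gamma\subset\mathbb{R}^d$ and $r>0$ put $e_r(\Gamma,X)=\big(\mathbb{E}\,d(X,\Gamma)^r\big)^{1/r}$ with $d(\xi,\Gamma)=\inf_{a\in\Gamma}|\xi-a|$ ($d(\xi,\emptyset)=+\infty$). A sequence $(a_N)_{N\ge1}$ in $\mathbb{R}^d$ is an $L^p$-optimal greedy quantization sequence if, writing $a^{(N)}=\{a_1,\dots,a_N\}$ and $a^{(0)}=\emptyset$, one has $a_{N+1}\in\operatorname{argmin}_{\xi\in\mathbb{R}^d}e_p(a^{(N)}\cup\{\xi\},X)$ for every $N\ge0$. For $b\in(0,\frac12)$, the $b$-maximal function associated with $(a_N)$ is $$\Psi_b(\xi)=\sup_{N\ge1}\frac{\lambda_d\big(B(\xi,b\,d(\xi,a^{(N)}))\big)}{\mu\big(B(\xi,b\,d(\xi,a^{(N)}))\big)}\in[0,+\infty],\quad\xi\in\mathbb{R}^d,$$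 where $\lambda_d$ is Lebesgue measure, $B(x,\rho)$ is the closed ball of center $x$ and radius $\rho$ for $|\cdot|$, and $\frac{0}{0}$, $\frac{c}{0}$ are interpreted with the conventions $\frac10=+\infty$. *)

(* Defs.v *)
From HB Require Import structures.
From mathcomp Require Import all_boot all_order all_algebra.
From mathcomp Require Import all_classical all_reals all_analysis.
Set Implicit Arguments. Unset Strict Implicit. Unset Printing Implicit Defensive.
Import Order.TTheory GRing.Theory Num.Theory.
Local Open Scope classical_set_scope.
Local Open Scope ring_scope.

(* R^d is represented by d.-tuple R, which MathComp-Analysis equips with the
   product (= Borel) sigma-algebra generated by the coordinate maps. *)

Section Defs.
Variables (R : realType) (d : nat).
Local Notation T := (d.-tuple R).

Definition vadd (x y : T) : T := [tuple tnth x i + tnth y i | i < d].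
Definition vsub (x y : T) : T := [tuple tnth x i - tnth y i | i < d].
Definition vscale (a : R) (x : T) : T := [tuple a * tnth x i | i < d].
Definition vzero : T := [tuple (0 : R) | i < d].

Definition is_norm (nrm : T -> R) : Prop :=
  [/\ forall x, nrm x = 0 -> x = vzero,
      forall a x, nrm (vscale a x) = `|a| * nrm x
    & forall x y, nrm (vadd x y) <= nrm x + nrm y].

Definition cball (nrm : T -> R) (x : T) (r : R) : set T :=
  [set y | nrm (vsub y x) <= r].

(* Lebesgue measure lambda_d (as Lebesgue outer measure: infimum of the total
   volume of countable covers by closed boxes; it coincides with Lebesgue
   measure on Borel sets, in particular on closed balls). *)
Definition box (l u : T) : set T :=
  [set x | forall i, tnth l i <= tnth x i <= tnth u i].
Definition box_vol (l u : T) : R := \prod_(i < d) (tnth u i - tnth l i).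
Definition lebesgue_d (A : set T) : \bar R :=
  ereal_inf [set s | exists (l u : nat -> T),
    [/\ (forall k i, tnth (l k) i <= tnth (u k) i),
        A `<=` \bigcup_k box (l k) (u k)
      & s = (\sum_(0 <= k <oo) (box_vol (l k) (u k))%:E)%E]].

(* distance to a set: d(xi, Gamma) = inf_{a in Gamma} |xi - a|, = +oo if empty *)
Definition dist_set (nrm : T -> R) (xi : T) (G : set T) : \bar R :=
  ereal_inf [set (nrm (vsub xi a))%:E | a in G].

(* L^r quantization error e_r(Gamma, X) = (E d(X,Gamma)^r)^(1/r), mu = law of X *)
Definition qerr (nrm : T -> R) (mu : probability T R) (r : R) (G : set T)
  : \bar R :=
  ((\int[mu]_xi (dist_set nrm xi G `^ r)) `^ r^-1)%E.

(* a^(N) = {a_1, ..., a_N}  (a : nat -> T, only indices >= 1 are used) *)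
Definition first_pts (a : nat -> T) (N : nat) : set T :=
  [set a k | k in [set k : nat | (1 <= k <= N)%N]].

Definition greedy_seq (nrm : T -> R) (mu : probability T R) (p : R)
    (a : nat -> T) : Prop :=
  forall (N : nat) (xi : T),
    (qerr nrm mu p (first_pts a N.+1) <=
       qerr nrm mu p (first_pts a N `|` [set xi]))%E.

Definition ratio_ball (mu : probability T R) (B : set T) : \bar R :=
  if mu B == 0%E then +oo%E else (lebesgue_d B * ((fine (mu B))^-1)%:E)%E.

Definition maxfun (nrm : T -> R) (mu : probability T R) (a : nat -> T)
    (b : R) (xi : T) : \bar R :=
  ereal_sup [set ratio_ball mu
                 (cball nrm xi (b * fine (dist_set nrm xi (first_pts a N))))
            | N in [set N : nat | (1 <= N)%N]].

End Defs.

(* Main.v *)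
From HB Require Import structures.
From mathcomp Require Import all_boot all_order all_algebra.
From mathcomp Require Import all_classical all_reals all_analysis.
From mathcomp Require Import measurable_realfun ring lra zify.
Require Import Defs.
Set Implicit Arguments. Unset Strict Implicit. Unset Printing Implicit Defensive.
Import Order.TTheory GRing.Theory Num.Theory.
Local Open Scope classical_set_scope.
Local Open Scope ring_scope.
Section NormLemmas.
Variables (R : realType) (d : nat) (nrm : d.-tuple R -> R).
Hypothesis Hn : is_norm nrm.
Local Notation T := (d.-tuple R).

Lemma tnth_vadd (x y : T) i : tnth (vadd x y) i = tnth x i + tnth y i.
Proof. by rewrite /vadd tnth_mktuple. Qed.
Lemma tnth_vsub (x y : T) i : tnth (vsub x y) i = tnth x i - tnth y i.
Proof. by rewrite /vsub tnth_mktuple. Qed.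
Lemma tnth_vscale a (x : T) i : tnth (vscale a x) i = a * tnth x i.
Proof. by rewrite /vscale tnth_mktuple. Qed.
Lemma tnth_vzero i : tnth (vzero R d) i = 0.
Proof. by rewrite /vzero tnth_mktuple. Qed.

Lemma nrm0 : nrm (vzero R d) = 0.
Proof.
case: Hn => _ Hs _.
have -> : vzero R d = vscale 0 (vzero R d).
  by apply: eq_from_tnth => i; rewrite tnth_vscale tnth_vzero mul0r.
by rewrite Hs normr0 mul0r.
Qed.

Lemma nrm_ge0 x : 0 <= nrm x.
Proof.
case: Hn => _ Hs Ht.
have e : vadd x (vscale (-1) x) = vzero R d.
  by apply: eq_from_tnth => i; rewrite tnth_vadd tnth_vscale tnth_vzero mulN1r subrr.
have := Ht x (vscale (-1) x); rewrite e nrm0 Hs normrN normr1 mul1r.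
by move=> h; rewrite -(@pmulr_rge0 _ 2) // mulr2n mulrDl mul1r.
Qed.

Lemma nrm_sym x y : nrm (vsub x y) = nrm (vsub y x).
Proof.
case: Hn => _ Hs _.
have -> : vsub x y = vscale (-1) (vsub y x).
  by apply: eq_from_tnth => i; rewrite tnth_vscale !tnth_vsub mulN1r opprB.
by rewrite Hs normrN normr1 mul1r.
Qed.

Lemma nrm_tri x y z : nrm (vsub x z) <= nrm (vsub x y) + nrm (vsub y z).
Proof.
case: Hn => _ _ Ht.
have -> : vsub x z = vadd (vsub x y) (vsub y z).
  by apply: eq_from_tnth => i; rewrite tnth_vadd !tnth_vsub addrA subrK.
exact: Ht.
Qed.

Lemma nrm_sub_le x a : nrm (vsub x a) <= nrm x + nrm a.
Proof.
case: Hn => _ Hs Ht.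
have -> : vsub x a = vadd x (vscale (-1) a).
  by apply: eq_from_tnth => i; rewrite tnth_vadd tnth_vsub tnth_vscale mulN1r.
by apply: (le_trans (Ht _ _)); rewrite Hs normrN normr1 mul1r.
Qed.

Definition supn (y : T) : R := \big[Order.max/0]_(i < d) `|tnth y i|.

Lemma supn_ge0 y : 0 <= supn y.
Proof. by apply: bigmax_ge_id. Qed.

Lemma supn_ge y i : `|tnth y i| <= supn y.
Proof. exact: le_bigmax. Qed.

Lemma supn_lt y e : 0 < e -> (forall i, `|tnth y i| < e) -> supn y < e.
Proof. by move=> e0 h; apply/bigmax_lt => // i _; exact: h. Qed.

Definition ebas (i : 'I_d) : T := [tuple ((i == j)%:R : R) | j < d].
Definition pfx (k : nat) (y : T) : T :=
  [tuple (if (j < k)%N then tnth y j else 0) | j < d].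

Lemma nrm_pfx y k :
  nrm (pfx k y) <= \sum_(j < d | (j < k)%N) `|tnth y j| * nrm (ebas j).
Proof.
case: Hn => _ Hs Ht.
elim: k => [|k IH].
  have -> : pfx 0 y = vzero R d.
    by apply: eq_from_tnth => i; rewrite tnth_vzero /pfx ?tnth_mktuple.
  by rewrite nrm0 big_pred0.
have [kd|kd] := ltnP k d; last first.
  have -> : pfx k.+1 y = pfx k y.
    apply: eq_from_tnth => i; rewrite /pfx !tnth_mktuple.
    by rewrite (leq_trans (ltn_ord i) kd) (leq_trans (ltn_ord i) (leqW kd)).
  apply: (le_trans IH); rewrite le_eqVlt; apply/orP; left; apply/eqP.
  apply: eq_bigl => i.
  by rewrite (leq_trans (ltn_ord i) kd) (leq_trans (ltn_ord i) (leqW kd)).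
set o := Ordinal kd.
have -> : pfx k.+1 y = vadd (pfx k y) (vscale (tnth y o) (ebas o)).
  apply: eq_from_tnth => i; rewrite tnth_vadd tnth_vscale /pfx /ebas !tnth_mktuple.
  have oi : (o == i) = (k == i) by [].
  rewrite oi ltnS; case: (ltngtP i k) => hik.
  - by rewrite mulr0 addr0.
  - by rewrite mulr0 addr0.
  - by rewrite mulr1 add0r; congr tnth; apply: val_inj; rewrite /= hik.
rewrite (bigD1 o) //=.
rewrite addrC; apply: (le_trans (Ht _ _)); apply: lerD.
  apply: (le_trans IH); rewrite le_eqVlt; apply/orP; left; apply/eqP.
  apply: eq_bigl => i; rewrite ltnS (_ : (i != o) = (nat_of_ord i != k)) //.
  by case: ltngtP => h //=; rewrite ?(ltn_eqF h) ?(gtn_eqF h) ?h ?eqxx.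
by rewrite Hs.
Qed.

Definition Mn : R := 1 + \sum_(j < d) nrm (ebas j).

Lemma Mn_gt0 : 0 < Mn.
Proof. by rewrite /Mn; apply: (lt_le_trans ltr01); rewrite lerDl; apply: sumr_ge0 => i _; exact: nrm_ge0. Qed.

Lemma nrm_le_supn y : nrm y <= Mn * supn y.
Proof.
have e : pfx d y = y.
  by apply: eq_from_tnth => i; rewrite /pfx tnth_mktuple ltn_ord.
rewrite -{1}e; apply: (le_trans (nrm_pfx _ _)).
rewrite (@eq_bigl _ _ _ _ _ _ xpredT); last by move=> i; rewrite ltn_ord.
apply: (@le_trans _ _ (\sum_(j < d) supn y * nrm (ebas j))).
  apply: ler_sum => i _; apply: ler_wpM2r; first exact: nrm_ge0.
  exact: supn_ge.
rewrite -mulr_sumr mulrC; apply: ler_wpM2r; first exact: supn_ge0.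
by rewrite /Mn lerDr.
Qed.

End NormLemmas.
Section Meas.
Variables (R : realType) (d : nat) (nrm : d.-tuple R -> R).
Hypothesis Hn : is_norm nrm.
Local Notation T := (d.-tuple R).

Lemma meas_vsub (a : T) : measurable_fun setT (fun x : T => vsub x a).
Proof.
apply/measurable_fun_tnthP => i.
rewrite (_ : _ \o _ = (fun x : T => tnth x i - tnth a i)); last first.
  by apply: funext => x /=; rewrite tnth_vsub.
by apply: measurable_funB => //; exact: measurable_tnth.
Qed.

Lemma meas_bigmax (I : eqType) (s : seq I) (f : I -> T -> R) :
  (forall i, measurable_fun setT (f i)) ->
  measurable_fun setT (fun x => \big[Order.max/0]_(i <- s) f i x).
Proof.
move=> mf; elim: s => [|i s IH].
  by under eq_fun do rewrite big_nil; exact: measurable_cst.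
under eq_fun do rewrite big_cons.
exact: measurable_maxr.
Qed.

Lemma meas_supn : measurable_fun setT (@supn R d).
Proof.
apply: (@meas_bigmax _ _ (fun i (x : T) => `|tnth x i|)) => i.
apply: measurableT_comp; first exact: normr_measurable.
exact: measurable_tnth.
Qed.

Lemma nrm_le_add (x y : T) : nrm x <= nrm y + nrm (vsub x y).
Proof.
case: Hn => _ _ Ht.
have {1}-> : x = vadd y (vsub x y).
  by apply: eq_from_tnth => i; rewrite tnth_vadd tnth_vsub addrC subrK.
exact: Ht.
Qed.

Definition q0 : d.-tuple rat := [tuple 0 | _ < d].
Definition qt (n : nat) : T :=
  [tuple ratr (tnth (odflt q0 (unpickle n)) i) | i < d].

Lemma meas_nrm : measurable_fun setT nrm.
Proof.
apply: (measurability _ (RGenInftyO.measurableE R)) => //.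
move=> /= _ [_ [r ->] <-].
set g := fun n (x : T) => nrm (qt n) + Mn nrm * supn (vsub x (qt n)).
have mg n : measurable_fun setT (g n).
  apply: measurable_funD; first exact: measurable_cst.
  apply: measurable_funM; first exact: measurable_cst.
  apply: measurableT_comp; first exact: meas_supn.
  exact: meas_vsub.
have -> : setT `&` nrm @^-1` `]-oo, r[ = \bigcup_n (setT `&` g n @^-1` `]-oo, r[).
  apply/seteqP; split => x /=.
    rewrite /= in_itv /= => -[_ xr].
    pose e := (r - nrm x) / (2 * Mn nrm).
    have M0 := Mn_gt0 Hn.
    have e0 : 0 < e by rewrite divr_gt0 // ?subr_gt0 // mulr_gt0.
    have H i : tnth x i - e < tnth x i + e by rewrite ltrBlDr -addrA ltrDl addr_gt0.
    pose qq : d.-tuple rat := [tuple xchoose (rat_in_itvoo (H i)) | i < d].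
    exists (pickle qq) => //; split => //=.
    have eq : qt (pickle qq) = [tuple ratr (xchoose (rat_in_itvoo (H i))) | i < d].
      by apply: eq_from_tnth => i; rewrite /qt pickleK /= !tnth_mktuple.
    have hs1 : supn (vsub x (qt (pickle qq))) < e.
      apply: supn_lt => // i; rewrite tnth_vsub eq tnth_mktuple.
      have := xchooseP (rat_in_itvoo (H i)); rewrite in_itv /= => /andP[h1 h2].
      by rewrite ltr_norml; apply/andP; split; lra.
    have hs2 : supn (vsub (qt (pickle qq)) x) < e.
      apply: supn_lt => // i; rewrite tnth_vsub eq tnth_mktuple.
      have := xchooseP (rat_in_itvoo (H i)); rewrite in_itv /= => /andP[h1 h2].
      by rewrite ltr_norml; apply/andP; split; lra.
    rewrite in_itv /= /g.
    have h1 := nrm_le_add (qt (pickle qq)) x.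
    have h2 := nrm_le_supn Hn (vsub (qt (pickle qq)) x).
    have h3 : Mn nrm * supn (vsub (qt (pickle qq)) x) <= Mn nrm * e.
      by rewrite ler_pM2l // ltW.
    have h4 : Mn nrm * supn (vsub x (qt (pickle qq))) < Mn nrm * e.
      by rewrite ltr_pM2l.
    have h5 : Mn nrm * e * 2 = r - nrm x.
      by rewrite /e; field; rewrite gt_eqF.
    lra.
  move=> [n _ [_]]; rewrite /= !in_itv /= /g => h; split => //.
  apply: (le_lt_trans (nrm_le_add x (qt n))).
  apply: (le_lt_trans _ h); rewrite lerD2l; exact: nrm_le_supn.
apply: bigcupT_measurable => n.
exact: (mg n measurableT _ (measurable_itv _)).
Qed.

Lemma meas_nrm_sub (a : T) : measurable_fun setT (fun x => nrm (vsub x a)).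
Proof. apply: measurableT_comp; [exact: meas_nrm | exact: meas_vsub]. Qed.

End Meas.
Section IntegralMono.
Local Open Scope ereal_scope.
Lemma le_integral_nm (dd : measure_display) (X : measurableType dd) (R : realType)
   (mu : {measure set X -> \bar R}) (D : set X) (f g : X -> \bar R) :
  (forall x, D x -> 0 <= f x) -> (forall x, D x -> f x <= g x) ->
  \int[mu]_(x in D) f x <= \int[mu]_(x in D) g x.
Proof.
move=> f0 fg.
have g0 : forall x, D x -> 0 <= g x by move=> x Dx; exact: le_trans (f0 x Dx) (fg x Dx).
rewrite !ge0_integralE //.
apply: ge_ereal_sup => _ [h hf <-]; apply: ereal_sup_ubound; exists h => //= x.
apply: (le_trans (hf x)); rewrite /patch; case: ifP => // /set_mem Dx.
exact: fg.
Qed.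
End IntegralMono.

Section Boxes.
Variable R : realType.
Local Open Scope ring_scope.

Definition hd n (t : n.+1.-tuple R) : R := tnth t ord0.
Definition tl n (t : n.+1.-tuple R) : n.-tuple R := [tuple tnth t (lift ord0 i) | i < n].

Lemma box_split n (l u x : n.+1.-tuple R) :
  box l u x <-> (hd l <= hd x <= hd u /\ box (tl l) (tl u) (tl x)).
Proof.
split.
  move=> h; split; first exact: h.
  by move=> i; rewrite /tl !tnth_mktuple; exact: h.
move=> [h0 h1] i; case: (unliftP ord0 i) => [j ->|->] //.
by have := h1 j; rewrite /tl !tnth_mktuple.
Qed.

Lemma vol_split n (l u : n.+1.-tuple R) :
  box_vol l u = (hd u - hd l) * box_vol (tl l) (tl u).
Proof.
rewrite /box_vol big_ord_recl; congr (_ * _).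
by apply: eq_bigr => i _; rewrite /tl !tnth_mktuple.
Qed.

Lemma tl_cons n t (y : n.-tuple R) : tl [tuple of t :: y] = y.
Proof. by apply: eq_from_tnth => i; rewrite /tl tnth_mktuple tnthS. Qed.

Lemma hd_cons n t (y : n.-tuple R) : hd [tuple of t :: y] = t.
Proof. by []. Qed.

Lemma vol_ge0 n (l u : n.-tuple R) : (forall i, tnth l i <= tnth u i) -> 0 <= box_vol l u.
Proof. by move=> h; apply: prodr_ge0 => i _; rewrite subr_ge0. Qed.

Lemma leb_cc (a b : R) : a <= b ->
  lebesgue_measure (`[a, b]%classic : set R) = (b - a)%:E.
Proof.
move=> hab; rewrite lebesgue_measure_itv /=; case: ifP; first by [].
rewrite lte_fin => /negbT; rewrite -leNgt => hba.
have eab : a = b by apply/le_anti/andP.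
by rewrite eab subrr.
Qed.

Lemma cover_lemma n : forall (l u : n.-tuple R) (L U : nat -> n.-tuple R) (P : nat -> bool),
  (forall i, tnth l i <= tnth u i) ->
  (forall k i, tnth (L k) i <= tnth (U k) i) ->
  box l u `<=` \bigcup_(k in [set k | P k]) box (L k) (U k) ->
  ((box_vol l u)%:E <= \sum_(0 <= k <oo) ((P k)%:R * box_vol (L k) (U k))%:E)%E.
Proof.
elim: n => [|n IH] l u L U P hlu hLU hcov.
  have [k Pk _] := hcov l (fun i => match i with @Ordinal _ _ h => False_ind _ (notF h) end).
  apply: (le_trans _ (nneseries_lim_ge k.+1 _)); last first.
    by move=> m _ _; rewrite lee_fin mulr_ge0 // vol_ge0.
  rewrite big_nat_recr //= Pk mul1r /box_vol !big_ord0 -[X in (X <= _)%E]add0e.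
  apply: leeD; last by [].
  by rewrite sume_ge0 // => m _; rewrite lee_fin mulr_ge0 // vol_ge0.
set a := hd l; set b := hd u.
have hab : a <= b by exact: hlu.
have htl : forall i, tnth (tl l) i <= tnth (tl u) i by move=> i; rewrite /tl !tnth_mktuple.
have hLU' : forall k i, tnth (tl (L k)) i <= tnth (tl (U k)) i.
  by move=> k i; rewrite /tl !tnth_mktuple.
set v := box_vol (tl l) (tl u).
have v0 : 0 <= v by exact: vol_ge0.
pose c k := (P k)%:R * box_vol (tl (L k)) (tl (U k)).
have c0 k : 0 <= c k by rewrite mulr_ge0 // vol_ge0.
pose I k : set R := `[hd (L k), hd (U k)]%classic.
pose f k t := (c k * \1_(I k) t)%:E.
have f0 k t : (0 <= f k t)%E by rewrite lee_fin mulr_ge0.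
have mf k : measurable_fun setT (f k).
  apply/measurable_EFinP; apply: measurable_funM; first exact: measurable_cst.
  by apply: measurable_indic; exact: measurable_itv.
have pw : forall t, a <= t <= b -> (v%:E <= \sum_(0 <= k <oo) f k t)%E.
  move=> t tab.
  have := IH (tl l) (tl u) (fun k => tl (L k)) (fun k => tl (U k))
    (fun k => P k && (t \in I k)) htl hLU'.
  have cov : box (tl l) (tl u) `<=`
      \bigcup_(k in [set k | P k && (t \in I k)]) box (tl (L k)) (tl (U k)).
    move=> y hy.
    have hx : box l u [tuple of t :: y].
      by apply/box_split; rewrite hd_cons tl_cons.
    have [k Pk /box_split[hk1 hk2]] := hcov _ hx.
    exists k; last by move: hk2; rewrite tl_cons.
    rewrite /= Pk /=; apply/mem_set; rewrite /I /= in_itv /=.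
    by move: hk1; rewrite hd_cons.
  move=> /(_ cov) h; apply: (le_trans h); apply: lee_nneseries.
    by move=> k _ _; rewrite lee_fin mulr_ge0 // vol_ge0.
  move=> k _; rewrite /f /c indicE; case: (P k) => /=.
    by rewrite !mul1r mulrC.
  by rewrite !mul0r.
have leb : lebesgue_measure (`[a, b]%classic : set R) = (b - a)%:E.
  rewrite lebesgue_measure_itv /=; case: ifP; first by [].
  rewrite lte_fin => /negbT; rewrite -leNgt => hba.
  have eab : a = b by apply/le_anti/andP.
  by rewrite eab subrr.
have -> : box_vol l u = (b - a) * v by rewrite vol_split.
have e1 : ((b - a) * v)%:E = (\int[lebesgue_measure]_(t in `[a, b]%classic) (cst v%:E) t)%E.
  rewrite integral_cst; last exact: measurable_itv.
  apply: (@eq_trans _ _ (v%:E * (b-a)%:E)%E); first by rewrite -EFinM mulrC.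
  by congr (_ * _)%E; rewrite -leb.
rewrite e1.
pose F := fun t => (\sum_(0 <= k <oo) f k t)%E.
have F0 : forall t, (0 <= F t)%E by move=> t; apply: nneseries_ge0 => *; exact: f0.
apply: (@le_trans _ _ (\int[lebesgue_measure]_(t in `[a, b]%classic) F t)%E).
  apply: le_integral_nm; first by move=> t _; rewrite lee_fin.
  by move=> t /=; rewrite in_itv /=; exact: pw.
rewrite integral_mkcond.
apply: (@le_trans _ _ (\int[lebesgue_measure]_t F t)%E).
  apply: le_integral_nm.
    by move=> t _; rewrite /patch; case: ifP.
  by move=> t _; rewrite /patch; case: ifP.
rewrite /F integral_nneseries //.
apply: lee_nneseries; first by move=> k _ _; apply: integral_ge0 => t _; exact: f0.
move=> k _; rewrite /f.
under eq_integral do rewrite EFinM.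
rewrite ge0_integralZl //; first last.
* by rewrite lee_fin.
* by apply/measurable_EFinP; apply: measurable_indic; exact: measurable_itv.
rewrite integral_indic //; last exact: measurable_itv.
rewrite setIT.
have hk := hLU k ord0.
rewrite [X in (_ * X)%E](_ : _ = (hd (U k) - hd (L k))%:E); last exact: leb_cc.
by rewrite -EFinM /c (vol_split (L k) (U k)) lee_fin le_eqVlt; apply/orP; left; apply/eqP; ring.
Qed.

End Boxes.
Section Ball.
Variables (R : realType) (d : nat) (nrm : d.-tuple R -> R).
Hypothesis Hn : is_norm nrm.
Local Notation T := (d.-tuple R).

Lemma lebd_mono (A B : set T) : A `<=` B -> (lebesgue_d A <= lebesgue_d B)%E.
Proof.
move=> AB; apply: le_ereal_inf => s [l [u [h1 h2 ->]]].
by exists l, u; split => //; exact: subset_trans h2.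
Qed.

Lemma lebd_box (l u : T) : (forall i, tnth l i <= tnth u i) ->
  ((box_vol l u)%:E <= lebesgue_d (box l u))%E.
Proof.
move=> hlu; apply/ereal_infP => _ [L [U [hLU cov ->]]].
have := @cover_lemma R d l u L U xpredT hlu hLU.
rewrite (eq_eseriesr (g := fun k => (box_vol (L k) (U k))%:E)); last by move=> k _; rewrite mul1r.
apply; move=> x /cov [k _ hk]; by exists k.
Qed.

Lemma supn_le (y : T) e : 0 <= e -> (forall i, `|tnth y i| <= e) -> supn y <= e.
Proof. by move=> e0 h; apply: bigmax_le => // i _; exact: h. Qed.

Lemma lebd_ball (x : T) (r : R) : 0 <= r ->
  (((2 * (r / Mn nrm)) ^+ d)%:E <= lebesgue_d (cball nrm x r))%E.
Proof.
move=> r0.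
have M0 := Mn_gt0 Hn.
set e := r / Mn nrm.
have e0 : 0 <= e by rewrite divr_ge0 // ltW.
pose lo : T := [tuple tnth x i - e | i < d].
pose hi : T := [tuple tnth x i + e | i < d].
have hlh : forall i, tnth lo i <= tnth hi i.
  by move=> i; rewrite !tnth_mktuple; lra.
apply: (le_trans _ (lebd_mono (A := box lo hi) _)).
  apply: (le_trans _ (lebd_box hlh)); rewrite lee_fin /box_vol.
  rewrite (eq_bigr (fun _ => 2 * e)); last by move=> i _; rewrite !tnth_mktuple; ring.
  by rewrite prodr_const card_ord.
move=> y hy; rewrite /cball /=.
apply: (le_trans (nrm_le_supn Hn _)).
have : supn (vsub y x) <= e.
  apply: supn_le => // i; rewrite tnth_vsub.
  have := hy i; rewrite !tnth_mktuple => /andP[h1 h2].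
  by rewrite ler_norml; apply/andP; split; lra.
move=> h; apply: (le_trans (ler_wpM2l (ltW M0) h)).
by rewrite /e mulrC -mulrA mulVf ?mulr1 // gt_eqF.
Qed.

End Ball.
Section Dist.
Variables (R : realType) (d : nat) (nrm : d.-tuple R -> R).
Hypothesis Hn : is_norm nrm.
Local Notation T := (d.-tuple R).

Fixpoint rd (a : nat -> T) (N : nat) (x : T) : R :=
  match N with
  | 0%N => nrm (vsub x (a 1%N))
  | N'.+1 => Order.min (rd a N' x) (nrm (vsub x (a N'.+1)))
  end.

Lemma rd_le a N x k : (1 <= k <= N)%N -> rd a N x <= nrm (vsub x (a k)).
Proof.
elim: N => [|N IH] /andP[k1 kN]; first by move: (leq_trans k1 kN).
rewrite /= ge_min; move: kN; rewrite leq_eqVlt => /orP[/eqP ->|kN].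
  by rewrite lexx orbT.
by rewrite IH ?k1.
Qed.

Lemma rd_le1 a N x : rd a N x <= nrm (vsub x (a 1%N)).
Proof.
elim: N => [|N IH] /=; first by [].
by rewrite ge_min IH.
Qed.

Lemma rd_attained a N x : exists k, (1 <= k <= maxn N 1)%N /\ rd a N x = nrm (vsub x (a k)).
Proof.
elim: N => [|N [k [hk e]]]; first by exists 1%N.
rewrite /=; case: (leP (rd a N x) (nrm (vsub x (a N.+1)))) => h.
  exists k; split; last by rewrite e.
  move: hk => /andP[h1 h2]; apply/andP; split => //; lia.
by exists N.+1; split => //; apply/andP; split => //; lia.
Qed.

Lemma rd_ge0 a N x : 0 <= rd a N x.
Proof. by have [k [_ ->]] := rd_attained a N x; exact: nrm_ge0. Qed.

Lemma meas_rd a N : measurable_fun setT (rd a N).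
Proof.
elim: N => [|N IH] /=; first exact: meas_nrm_sub.
exact: (measurable_minr IH (meas_nrm_sub Hn (a N.+1))).
Qed.

Lemma dist_eq a N x : (1 <= N)%N ->
  dist_set nrm x (first_pts a N) = (rd a N x)%:E.
Proof.
move=> N1; apply/eqP; rewrite eq_le; apply/andP; split.
  apply: ereal_inf_lbound.
  have [k [hk e]] := rd_attained a N x.
  exists (a k); last by rewrite e.
  by exists k => //=; rewrite (maxn_idPl N1) in hk.
apply/ereal_infP => _ [y [k hk <-] <-].
rewrite lee_fin; exact: rd_le.
Qed.

Definition upd (a : nat -> T) (N : nat) (xi : T) : nat -> T :=
  fun k => if k == N.+1 then xi else a k.

Lemma rd_upd a N xi M x : (1 <= N)%N -> (M <= N)%N -> rd (upd a N xi) M x = rd a M x.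
Proof.
move=> hN; elim: M => [|M IH] hM /=.
  by rewrite /upd; case: eqP => // e; exfalso; move: e hN; lia.
rewrite IH ?(ltnW hM) //; congr (Order.min _ (nrm (vsub x _))).
by rewrite /upd; case: eqP => // e; exfalso; move: e hM; lia.
Qed.

Lemma first_pts_upd a N xi :
  first_pts (upd a N xi) N.+1 = first_pts a N `|` [set xi].
Proof.
apply/seteqP; split => y.
  move=> [k /= /andP[k1 kN] <-]; rewrite /upd; case: eqP => [_|ne].
    by right.
  left; exists k => //=; rewrite k1 /=.
  by move: kN; rewrite leq_eqVlt => /orP[/eqP e|]; [exfalso; exact: ne|].
case => [[k /= /andP[k1 kN] <-]|->].
  exists k; first by rewrite /= k1 (leq_trans kN).
  by rewrite /upd; case: eqP => // e; move: kN; rewrite e ltnn.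
by exists N.+1; [rewrite /= ltnS leqnn | rewrite /upd eqxx].
Qed.

End Dist.
Section Recur.
Variable R : realType.

Lemma tangent_t (t s : R) : 0 < t <= 1 -> 0 <= s -> 1 + s * (1 - t) <= t `^ (- s).
Proof.
move=> /andP[t0 t1] s0.
rewrite /powR (gt_eqF t0).
apply: (le_trans _ (expR_ge1Dx _)); rewrite lerD2l.
have : ln t <= t - 1.
  have e : 1 + (t - 1) = t by ring.
  by have := @le_ln1Dx R (t - 1); rewrite e; apply; lra.
move=> h; rewrite mulNr -mulrN; apply: ler_wpM2l => //; lra.
Qed.

Lemma step_ineq (x y s K : R) : 0 < x -> x <= y -> 0 <= s ->
  y `^ (1 + s) <= K * (y - x) -> y `^ (- s) + s / K <= x `^ (- s).
Proof.
move=> x0 xy s0 h.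
have y0 : 0 < y by exact: lt_le_trans xy.
have ys0 : 0 < y `^ s by exact: powR_gt0.
have e1 : y `^ (1 + s) = y * y `^ s.
  by rewrite powRD ?powRr1 ?(ltW y0) //; apply/implyP => _; rewrite gt_eqF.
rewrite e1 in h.
have K0 : 0 < K.
  have hp : 0 < y * y `^ s by exact: mulr_gt0.
  have hyx : 0 <= y - x by lra.
  rewrite ltNge; apply/negP => K0; have := mulr_le0_ge0 K0 hyx; lra.
set t := x / y.
have t0 : 0 < t <= 1 by apply/andP; split; [exact: divr_gt0 | rewrite ler_pdivrMr // mul1r].
have ex : x = t * y by rewrite /t divfK // gt_eqF.
have hx : x `^ (- s) = t `^ (- s) * y `^ (- s).
  by rewrite ex powRM // ltW //; case/andP: t0.
rewrite hx powRN.
have := tangent_t t0 s0.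
move=> ht.
have h1t : y * y `^ s / K <= y - x by rewrite ler_pdivrMr // [(y - x) * K]mulrC.
have h2 : y `^ s / K <= 1 - t.
  have -> : 1 - t = (y - x) / y by rewrite /t; field; rewrite gt_eqF.
  rewrite ler_pdivlMr //; apply: le_trans h1t.
  by rewrite le_eqVlt; apply/orP; left; apply/eqP; field; rewrite gt_eqF.
have iy : 0 < (y `^ s)^-1 by rewrite invr_gt0.
apply: (le_trans _ (ler_wpM2r (ltW iy) ht)).
rewrite mulrDl mul1r lerD2l.
apply: (le_trans _ (ler_wpM2r (ltW iy) (ler_wpM2l s0 h2))).
rewrite le_eqVlt; apply/orP; left; apply/eqP; field.
by rewrite !gt_eqF.
Qed.

End Recur.
Section Recur2.
Variable R : realType.

Lemma recur (u : nat -> R) (K s : R) : 0 < s ->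
  (forall N, 0 <= u N) -> (forall N, (1 <= N)%N -> u N.+1 <= u N) ->
  (forall N, (1 <= N)%N -> u N `^ (1 + s) <= K * (u N - u N.+1)) ->
  exists c, 0 < c /\ forall N, (1 <= N)%N -> u N = 0 \/ c * N%:R <= u N `^ (- s).
Proof.
move=> s0 u0 ud uK.
pose K1 := Num.max K 1.
have K10 : 0 < K1 by rewrite /K1 lt_max ltr01 orbT.
pose c1 := if 0 < u 1%N then u 1%N `^ (- s) else 1.
have c10 : 0 < c1 by rewrite /c1; case: ifP => // h; exact: powR_gt0.
exists (Num.min (s / K1) c1); split; first by rewrite lt_min c10 divr_gt0.
elim => [//|N IH] _.
have [->|N0] := eqVneq N 0%N.
  have [h|h] := eqVneq (u 1%N) 0; first by left.
  right; have h1 : 0 < u 1%N by rewrite lt_def h u0.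
  by rewrite mulr1 ge_min /c1 h1 lexx orbT.
have hN : (1 <= N)%N by rewrite lt0n.
have [h|h] := eqVneq (u N.+1) 0; first by left.
right.
have x0 : 0 < u N.+1 by rewrite lt_def h u0.
have yx := ud N hN.
have y0 : 0 < u N by exact: lt_le_trans yx.
case: (IH hN) => [e|IH']; first by move: y0; rewrite e ltxx.
have st := step_ineq x0 yx (ltW s0) (uK N hN).
have K0 : 0 < K.
  have hp : 0 < u N `^ (1 + s) by exact: powR_gt0.
  have hyx : 0 <= u N - u N.+1 by lra.
  rewrite ltNge; apply/negP => K0; have := mulr_le0_ge0 K0 hyx; have := uK N hN; lra.
have sK : s / K1 <= s / K.
  by rewrite ler_pM2l // lef_pV2 ?posrE // /K1 le_max lexx.
apply: (le_trans _ st).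
rewrite -addn1 natrD mulrDr mulr1; apply: lerD => //.
by apply: le_trans sK; rewrite ge_min lexx.
Qed.

Lemma final_bound (u : nat -> R) (K p dr : R) : 0 < p -> 0 < dr ->
  (forall N, 0 <= u N) -> (forall N, (1 <= N)%N -> u N.+1 <= u N) ->
  (forall N, (1 <= N)%N -> u N `^ (1 + dr / p) <= K * (u N - u N.+1)) ->
  exists C, forall N, (1 <= N)%N -> N%:R `^ dr^-1 * u N `^ p^-1 <= C.
Proof.
move=> p0 d0 u0 ud uK.
have s0 : 0 < dr / p by exact: divr_gt0.
have [c [c0 hc]] := recur s0 u0 ud uK.
exists (c^-1 `^ dr^-1) => N hN.
have N0 : 0 < N%:R :> R by rewrite ltr0n.
case: (hc N hN) => [->|h].
  rewrite powR0 ?mulr0 ?powR_ge0 //; by rewrite invr_eq0 gt_eqF.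
have uN0 : 0 < u N.
  rewrite lt_def u0 andbT; apply/negP => /eqP e; move: h; rewrite e powR0.
    by rewrite leNgt mulr_gt0.
  by rewrite oppr_eq0 gt_eqF.
have e1 : N%:R `^ dr^-1 * u N `^ p^-1 = (N%:R * u N `^ (dr / p)) `^ dr^-1.
  rewrite powRM ?ltW ?powR_gt0 //; congr (_ * _).
  by rewrite -powRrM; congr (_ `^ _); field; rewrite !gt_eqF.
rewrite e1; apply: ge0_ler_powR; first by rewrite invr_ge0 ltW.
- by rewrite nnegrE mulr_ge0 // ltW // powR_gt0.
- by rewrite nnegrE invr_ge0 ltW.
have hu : 0 < u N `^ (dr / p) by exact: powR_gt0.
move: h; rewrite powRN => h.
rewrite -(ler_pM2l c0) mulrV ?gt_eqF //.
move: h; rewrite -(ler_pM2r hu) mulVf ?gt_eqF // => h.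
by rewrite mulrA.
by rewrite unitfE gt_eqF.
Qed.

End Recur2.
Lemma powR_sum_le (R : realType) (x y p : R) : 0 <= x -> 0 <= y -> 0 < p ->
  (x + y) `^ p <= 2 `^ p * (x `^ p + y `^ p).
Proof.
move=> x0 y0 p0.
wlog xy : x y x0 y0 / y <= x.
  move=> H; case: (leP y x) => h; first exact: H.
  by rewrite addrC [x `^ p + _]addrC; apply: H => //; exact: ltW.
have h1 : (x + y) `^ p <= (2 * x) `^ p.
  apply: ge0_ler_powR; first exact: ltW.
  - by rewrite nnegrE addr_ge0.
  - by rewrite nnegrE mulr_ge0.
  - lra.
apply: (le_trans h1); rewrite powRM //; apply: ler_wpM2l; first exact: powR_ge0.
by rewrite lerDl powR_ge0.
Qed.

Section Main1.
Variables (R : realType) (d : nat) (nrm : d.-tuple R -> R) (p : R)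
  (mu : probability (d.-tuple R) R).
Hypothesis Hn : is_norm nrm.
Hypothesis p0 : 0 < p.
Hypothesis hmom : (\int[mu]_xi ((nrm xi `^ p)%:E) < +oo)%E.
Local Notation T := (d.-tuple R).

Definition udg (aa : nat -> T) (M : nat) : \bar R :=
  (\int[mu]_x ((rd nrm aa M x) `^ p)%:E)%E.

Lemma mrdp aa M : measurable_fun setT (fun x => ((rd nrm aa M x) `^ p)%:E).
Proof.
apply/measurable_EFinP.
exact: (measurableT_comp (measurable_powR p) (meas_rd Hn aa M)).
Qed.

Lemma udg_ge0 aa M : (0 <= udg aa M)%E.
Proof. by apply: integral_ge0 => x _; rewrite lee_fin powR_ge0. Qed.

Lemma udg_fin aa M : udg aa M \is a fin_num.
Proof.
rewrite ge0_fin_numE ?udg_ge0 //.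
set c := nrm (aa 1%N).
have H1 : (udg aa M <= \int[mu]_x ((2 `^ p)%:E * ((nrm x `^ p)%:E + (c `^ p)%:E)))%E.
  apply: ge0_le_integral => //.
  - by move=> x _; rewrite lee_fin powR_ge0.
  - exact: mrdp.
  - apply: emeasurable_funM; first exact: measurable_cst.
    apply: emeasurable_funD; last exact: measurable_cst.
    apply/measurable_EFinP.
    exact: (measurableT_comp (measurable_powR p) (meas_nrm Hn)).
  move=> x _; rewrite -EFinD -EFinM lee_fin.
  apply: (le_trans _ (powR_sum_le (nrm_ge0 Hn x) (nrm_ge0 Hn (aa 1%N)) p0)).
  apply: ge0_ler_powR; first exact: ltW.
  - by rewrite nnegrE rd_ge0.
  - by rewrite nnegrE addr_ge0 // nrm_ge0.
  apply: (le_trans (rd_le1 nrm aa M x)); exact: nrm_sub_le.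
apply: (le_lt_trans H1).
rewrite ge0_integralZl //; first last.
- by move=> x _; rewrite adde_ge0 // lee_fin powR_ge0.
- apply: emeasurable_funD; last exact: measurable_cst.
  apply/measurable_EFinP.
  exact: (measurableT_comp (measurable_powR p) (meas_nrm Hn)).
rewrite ge0_integralD //; first last.
- by move=> x _; rewrite lee_fin powR_ge0.
- apply/measurable_EFinP.
  exact: (measurableT_comp (measurable_powR p) (meas_nrm Hn)).
- by move=> x _; rewrite lee_fin powR_ge0.
have Hc : (\int[mu]_x (c `^ p)%:E = (c `^ p)%:E)%E.
  rewrite integral_cst //; rewrite [X in (_ * X)%E](_ : _ = 1%E) ?mule1 //; exact: probability_setT.
rewrite Hc.
have Ifin : (\int[mu]_x (nrm x `^ p)%:E)%E \is a fin_num.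
  by rewrite ge0_fin_numE ?hmom //; apply: integral_ge0 => x _; rewrite lee_fin powR_ge0.
by rewrite -(fineK Ifin) -EFinD -EFinM ltry.
Qed.

Lemma qerr_eq aa M : (1 <= M)%N ->
  qerr nrm mu p (first_pts aa M) = ((fine (udg aa M)) `^ p^-1)%:E.
Proof.
move=> M1; rewrite /qerr -poweR_EFin fineK ?udg_fin //; congr (_ `^ _)%E.
apply: eq_integral => x _; by rewrite dist_eq // poweR_EFin.
Qed.

End Main1.
Lemma powR_inv_mono (R : realType) (x y p : R) : 0 <= x -> 0 <= y -> 0 < p ->
  x `^ p^-1 <= y `^ p^-1 -> x <= y.
Proof.
move=> x0 y0 p0 h.
have := ge0_ler_powR (ltW p0) _ _ h; rewrite !nnegrE !powR_ge0 => /(_ isT isT).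
by rewrite -!powRrM mulVf ?gt_eqF // !powRr1.
Qed.

Section Main2.
Variables (R : realType) (d : nat) (nrm : d.-tuple R -> R) (p : R)
  (mu : probability (d.-tuple R) R) (a : nat -> d.-tuple R) (b : R).
Hypothesis Hn : is_norm nrm.
Hypothesis p0 : 0 < p.
Hypothesis hmom : (\int[mu]_xi ((nrm xi `^ p)%:E) < +oo)%E.
Hypothesis hgreedy : greedy_seq nrm mu p a.
Hypothesis b0 : 0 < b.
Hypothesis b2 : b < 2^-1.
Local Notation T := (d.-tuple R).

Lemma omb0 : 0 <= 1 - b.
Proof. by have := b2; have := b0; lra. Qed.

Definition cc : R := (1 - b) `^ p - b `^ p.

Lemma cc_gt0 : 0 < cc.
Proof.
have hb1 : b < 1 - b by have := b2; have := b0; lra.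
rewrite /cc subr_gt0; apply: gt0_ltr_powR => //; rewrite ?nnegrE.
all: first [exact: (ltW b0) | exact: hb1 | lra].
Qed.

Definition u (N : nat) : R := fine (udg nrm p mu a N).

Lemma u_ge0 N : 0 <= u N.
Proof. by rewrite /u fine_ge0 // udg_ge0. Qed.

Lemma udgE aa N : udg nrm p mu aa N = (fine (udg nrm p mu aa N))%:E.
Proof. by rewrite fineK // udg_fin. Qed.

Lemma mcball (x : T) r : measurable (cball nrm x r).
Proof.
have := meas_nrm_sub Hn x measurableT (measurable_itv `]-oo, r]).
rewrite setTI; congr measurable; apply/seteqP; split => y /=; by rewrite in_itv.
Qed.

Lemma muB_fin (B : set T) : measurable B -> mu B = (fine (mu B))%:E.
Proof.
move=> mB; rewrite fineK //; rewrite ge0_fin_numE ?measure_ge0 //.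
by apply: le_lt_trans (probability_le1 _ mB) _; rewrite ltry.
Qed.

Lemma pointwise N xi x : (1 <= N)%N ->
  (rd nrm (upd a N xi) N.+1 x) `^ p + cc * (rd nrm a N xi) `^ p *
     \1_(cball nrm xi (b * rd nrm a N xi)) x
  <= (rd nrm a N x) `^ p.
Proof.
move=> N1; set D := rd nrm a N xi.
have -> : rd nrm (upd a N xi) N.+1 x = Order.min (rd nrm a N x) (nrm (vsub x xi)).
  by rewrite /= rd_upd // /upd eqxx.
set m := rd nrm a N x; set y := nrm (vsub x xi).
have m0 : 0 <= m by exact: rd_ge0.
have y0 : 0 <= y by exact: nrm_ge0.
have D0 : 0 <= D by exact: rd_ge0.
have mp0 : 0 <= Order.min m y by rewrite le_min m0 y0.
rewrite indicE; case: (boolP (x \in cball nrm xi (b * D))) => hB; last first.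
  rewrite mulr0 addr0; apply: (ge0_ler_powR (ltW p0)); rewrite ?nnegrE //.
  by rewrite ge_min lexx.
move: hB => /set_mem hB; rewrite /cball /= in hB.
rewrite mulr1.
have hm : (1 - b) * D <= m.
  have [k [hk e]] := rd_attained nrm a N x.
  rewrite (maxn_idPl N1) in hk.
  have h1 := rd_le nrm a xi hk.
  have h2 := nrm_tri Hn xi x (a k).
  rewrite (nrm_sym Hn xi x) -/y in h2.
  rewrite /m e; rewrite -/D in h1; rewrite -/y in hB; lra.
have hmy : Order.min m y `^ p <= (b * D) `^ p.
  apply: (ge0_ler_powR (ltW p0)); rewrite ?nnegrE //; first by rewrite mulr_ge0 // ltW.
  by rewrite ge_min hB orbT.
have hm2 : ((1 - b) * D) `^ p <= m `^ p.
  apply: (ge0_ler_powR (ltW p0)); rewrite ?nnegrE //.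
  by rewrite mulr_ge0 // omb0.
have e1 : (b * D) `^ p = b `^ p * D `^ p by rewrite powRM // ltW.
have e2 : ((1 - b) * D) `^ p = (1 - b) `^ p * D `^ p by rewrite powRM // omb0.
rewrite e1 in hmy; rewrite e2 in hm2.
rewrite /cc; lra.
Qed.


Lemma micro N xi : (1 <= N)%N ->
  cc * (rd nrm a N xi) `^ p * fine (mu (cball nrm xi (b * rd nrm a N xi)))
  <= u N - u N.+1.
Proof.
move=> N1.
set D := rd nrm a N xi; set B := cball nrm xi (b * D).
set a' := upd a N xi.
have g := hgreedy N xi.
rewrite -first_pts_upd (qerr_eq Hn p0 hmom) // (qerr_eq Hn p0 hmom) // lee_fin in g.
have g' : u N.+1 <= fine (udg nrm p mu a' N.+1).
  apply: (powR_inv_mono (u_ge0 _) _ p0 g); exact: fine_ge0 (udg_ge0 _ _ _ _ _).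
have mB : measurable B by exact: mcball.
have hsplit : (\int[mu]_x (((rd nrm a' N.+1 x) `^ p)%:E
                 + (cc * D `^ p * \1_B x)%:E)
   = udg nrm p mu a' N.+1 + (cc * D `^ p)%:E * mu B)%E.
  rewrite ge0_integralD //; first last.
  - apply/measurable_EFinP; apply: measurable_funM; first exact: measurable_cst.
    exact: measurable_indic.
  - by move=> x _; rewrite lee_fin mulr_ge0 // ?mulr_ge0 ?powR_ge0 ?indicE // ltW // cc_gt0.
  - exact: mrdp.
  - by move=> x _; rewrite lee_fin powR_ge0.
  congr (_ + _)%E.
  under eq_integral do rewrite EFinM.
  rewrite ge0_integralZl //.
  all: try (by move=> x _; rewrite lee_fin indicE).
  all: try (by apply/measurable_EFinP; exact: measurable_indic).
  all: try (by rewrite lee_fin mulr_ge0 ?powR_ge0 // ltW // cc_gt0).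
  by rewrite integral_indic // setIT.
have hint : (udg nrm p mu a' N.+1 + (cc * D `^ p)%:E * mu B <= udg nrm p mu a N)%E.
  rewrite -hsplit; apply: le_integral_nm.
    by move=> x _; rewrite -EFinD lee_fin addr_ge0 // ?powR_ge0 // mulr_ge0 ?indicE // mulr_ge0 ?powR_ge0 // ltW // cc_gt0.
  by move=> x _; rewrite -EFinD lee_fin; exact: pointwise.
rewrite (udgE a') (udgE a) (muB_fin mB) -EFinM -EFinD lee_fin in hint.
rewrite /u lerBrDr; apply: (le_trans _ hint); rewrite addrC; exact: lerD.
Qed.

Lemma u_decr N : (1 <= N)%N -> u N.+1 <= u N.
Proof.
move=> N1; have h2 := micro (vzero R d) N1.
have h1 : 0 <= cc * rd nrm a N (vzero R d) `^ p *
   fine (mu (cball nrm (vzero R d) (b * rd nrm a N (vzero R d)))).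
  by rewrite mulr_ge0 // ?mulr_ge0 ?powR_ge0 ?fine_ge0 ?measure_ge0 // ltW // cc_gt0.
by rewrite -subr_ge0; exact: le_trans h1 h2.
Qed.


Hypothesis d1 : (1 <= d)%N.
Hypothesis hpsi : (\int[mu]_xi (maxfun nrm mu a b xi `^ (p / (p + d%:R))) < +oo)%E.

Definition qq : R := p / (p + d%:R).
Lemma qq_gt0 : 0 < qq.
Proof. by rewrite /qq divr_gt0 // addr_gt0 // ltr0n. Qed.

Definition kap : R := (2 * (b / Mn nrm)) ^+ d.
Lemma kap_gt0 : 0 < kap.
Proof. by rewrite /kap exprn_gt0 // mulr_gt0 // divr_gt0 // Mn_gt0. Qed.

Lemma psi_ge x N : (1 <= N)%N ->
  (ratio_ball mu (cball nrm x (b * rd nrm a N x)) <= maxfun nrm mu a b x)%E.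
Proof.
move=> N1; rewrite /maxfun; apply: ereal_sup_ubound; exists N => //=.
by rewrite dist_eq.
Qed.

Lemma pw_bound N x eps : (1 <= N)%N -> 0 < eps ->
  (((rd nrm a N x) `^ p)%:E <=
   ((((u N - u N.+1) + eps) / (cc * kap)) `^ qq)%:E * (maxfun nrm mu a b x `^ qq))%E.
Proof.
move=> N1 e0.
set D := rd nrm a N x; set B := cball nrm x (b * D).
have D0 : 0 <= D by exact: rd_ge0.
have Del0 : 0 <= u N - u N.+1 by rewrite subr_ge0; exact: u_decr.
set K := (u N - u N.+1 + eps) / (cc * kap).
have K0 : 0 < K by rewrite /K divr_gt0 ?mulr_gt0 ?cc_gt0 ?kap_gt0 //; lra.
have Kq0 : 0 < K `^ qq by exact: powR_gt0.
have hm := micro x N1; rewrite -/D -/B in hm.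
have hr := psi_ge x N1; rewrite -/D -/B in hr.
have mB : measurable B by exact: mcball.
case: (eqVneq (mu B) 0) => hB.
  rewrite /ratio_ball hB eqxx leye_eq in hr.
  rewrite (eqP hr) poweRyr ?gt_eqF ?qq_gt0 // mulry gtr0_sg // mul1e.
  exact: leey.
rewrite /ratio_ball (negbTE hB) in hr.
have mfin := muB_fin mB.
set m := fine (mu B) in mfin hm hr.
have m0 : 0 < m.
  rewrite lt_def fine_ge0 ?measure_ge0 // andbT; apply/negP => /eqP e.
  by move: hB; rewrite mfin e eqxx.
have hl := lebd_ball Hn x (mulr_ge0 (ltW b0) D0); rewrite -/B in hl.
have ek : 2 * (b * D / Mn nrm) = (2 * (b / Mn nrm)) * D by ring.
rewrite ek exprMn -/kap in hl.
have h1 : (((kap * D ^+ d) / m)%:E <= maxfun nrm mu a b x)%E.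
  apply: le_trans hr; rewrite EFinM; apply: lee_wpmul2r; first by rewrite lee_fin invr_ge0 ltW.
  exact: hl.
have hk0 : 0 <= kap * D ^+ d / m.
  by apply: divr_ge0; [apply: mulr_ge0; [exact: ltW kap_gt0 | exact: exprn_ge0] | exact: ltW m0].
have h2 : ((((kap * D ^+ d) / m) `^ qq)%:E <= maxfun nrm mu a b x `^ qq)%E.
  rewrite -poweR_EFin; apply: (gt0_ler_poweR (ltW qq_gt0)) => //.
    by rewrite in_itv /= lee_fin hk0 leey.
  by rewrite in_itv /= leey andbT (le_trans _ h1) // lee_fin.
apply: (le_trans _ (lee_wpmul2l _ h2)); last by rewrite lee_fin ltW.
rewrite -EFinM lee_fin -powRM ?(ltW K0) //.
have [->|Dn0] := eqVneq D 0.
  by rewrite powR0 ?gt_eqF // powR_ge0.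
have Dp : 0 < D by rewrite lt_def Dn0 D0.
have hK : D `^ p <= K * kap / m.
  rewrite /K; have hcm : 0 < cc * m by rewrite mulr_gt0 ?cc_gt0.
  rewrite (_ : (u N - u N.+1 + eps) / (cc * kap) * kap / m = (u N - u N.+1 + eps) / (cc * m)); last first.
    by field; rewrite !gt_eqF ?kap_gt0 ?cc_gt0.
  rewrite ler_pdivlMr //.
  have -> : D `^ p * (cc * m) = cc * D `^ p * m by ring.
  lra.
have e1 : D ^+ d = D `^ d%:R by rewrite powR_mulrn.
have e2 : D `^ p * D `^ d%:R = D `^ (p + d%:R).
  by rewrite powRD //; apply/implyP => _; exact: Dn0.
have pd0 : p + d%:R != 0 by rewrite gt_eqF // addr_gt0 // ltr0n.
have e3 : (D `^ (p + d%:R)) `^ qq = D `^ p.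
  by rewrite -powRrM /qq; congr (_ `^ _); field.
rewrite -{1}e3; apply: (ge0_ler_powR (ltW qq_gt0)).
- by rewrite nnegrE powR_ge0.
- by rewrite nnegrE mulr_ge0 // ltW.
rewrite -e2 -e1 (_ : K * (kap * D ^+ d / m) = (K * kap / m) * D ^+ d); last by ring.
by apply: ler_wpM2r => //; exact: exprn_ge0.
Qed.

Definition Jr : R := fine (\int[mu]_xi (maxfun nrm mu a b xi `^ qq)).

Lemma J_fin : (\int[mu]_xi (maxfun nrm mu a b xi `^ qq))%E \is a fin_num.
Proof.
rewrite ge0_fin_numE; first exact: hpsi.
by apply: integral_ge0 => x _; exact: poweR_ge0.
Qed.

Lemma Jr_ge0 : 0 <= Jr.
Proof. by rewrite /Jr fine_ge0 //; apply: integral_ge0 => x _; exact: poweR_ge0. Qed.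

Lemma int_bound N eps : (1 <= N)%N -> 0 < eps ->
  u N <= (((u N - u N.+1) + eps) / (cc * kap)) `^ qq * Jr.
Proof.
move=> N1 e0.
set K := (u N - u N.+1 + eps) / (cc * kap).
have Del0 : 0 <= u N - u N.+1 by rewrite subr_ge0; exact: u_decr.
have K0 : 0 < K by rewrite /K divr_gt0 ?mulr_gt0 ?cc_gt0 ?kap_gt0 //; lra.
have Kq0 : 0 < K `^ qq by exact: powR_gt0.
have h : (((K `^ qq)^-1 * u N)%:E <= \int[mu]_xi (maxfun nrm mu a b xi `^ qq))%E.
  rewrite EFinM /u fineK ?udg_fin // /udg -ge0_integralZl //; first last.
  - by rewrite lee_fin invr_ge0 ltW.
  - by move=> x _; rewrite lee_fin powR_ge0.
  - exact: mrdp.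
  apply: le_integral_nm.
    by move=> x _; rewrite -EFinM lee_fin mulr_ge0 ?powR_ge0 // invr_ge0 ltW.
  move=> x _; have := pw_bound x N1 e0; rewrite -/K => hx.
  apply: le_trans (lee_wpmul2l _ hx) _; first by rewrite lee_fin invr_ge0 ltW.
  by rewrite muleA -EFinM mulVf ?gt_eqF // mul1e.
rewrite -(fineK J_fin) lee_fin -/Jr in h.
by rewrite mulrC -ler_pdivrMr // mulrC.
Qed.

Definition K0 : R := Jr `^ qq^-1 / (cc * kap).

Lemma K0_ge0 : 0 <= K0.
Proof. by rewrite /K0 divr_ge0 ?powR_ge0 // ltW // mulr_gt0 ?cc_gt0 ?kap_gt0. Qed.

Lemma rec_ineq N : (1 <= N)%N -> u N `^ (1 + d%:R / p) <= K0 * (u N - u N.+1).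
Proof.
move=> N1.
have Del0 : 0 <= u N - u N.+1 by rewrite subr_ge0; exact: u_decr.
have q0 := qq_gt0.
have key : forall eps, 0 < eps -> u N `^ qq^-1 <= (u N - u N.+1 + eps) * K0.
  move=> eps e0; have h := int_bound N1 e0.
  set K := (u N - u N.+1 + eps) / (cc * kap) in h.
  have K0' : 0 <= K by rewrite /K divr_ge0 ?(ltW (mulr_gt0 cc_gt0 kap_gt0)) //; lra.
  have qi : 0 < qq^-1 by rewrite invr_gt0.
  have := ge0_ler_powR (ltW qi) _ _ h; rewrite !nnegrE u_ge0 mulr_ge0 ?powR_ge0 ?Jr_ge0 //.
  move=> /(_ isT isT); rewrite powRM ?powR_ge0 ?Jr_ge0 // -powRrM mulfV ?gt_eqF // powRr1 //.
  move=> hh; apply: (le_trans hh).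
  rewrite /K /K0 le_eqVlt; apply/orP; left; apply/eqP; field.
  by rewrite !gt_eqF ?cc_gt0 ?kap_gt0.
have e : 1 + d%:R / p = qq^-1.
  by rewrite /qq invf_div; field; rewrite gt_eqF.
rewrite e; apply/ler_addgt0Pr => e' e'0.
have K10 : 0 < K0 + 1 by have := K0_ge0; lra.
have := key (e' / (K0 + 1)) (divr_gt0 e'0 K10).
have hle : e' / (K0 + 1) * K0 <= e'.
  by rewrite mulrAC ler_pdivrMr // ler_pM2l // lerDl ler01.
move=> h; apply: (le_trans h).
rewrite mulrDl [(u N - u N.+1) * K0]mulrC; exact: lerD.
Qed.

Lemma main_bound : exists C, forall N, (1 <= N)%N ->
  N%:R `^ (d%:R)^-1 * u N `^ p^-1 <= C.
Proof.
apply: (@final_bound R u K0 p d%:R p0 _ u_ge0 u_decr rec_ineq).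
by rewrite ltr0n.
Qed.

Lemma esup_bound (v : nat -> \bar R) (B : R) : (forall N, (v N <= B%:E)%E) ->
  (limn_esup v < +oo)%E.
Proof.
move=> hv; rewrite limn_esup_lim.
have -> : limn (esups v) = ereal_inf (range (esups v)).
  by apply/cvg_lim => //; exact: cvg_esups_inf.
apply: (@le_lt_trans _ _ (esups v 0)); first by apply: ereal_inf_lbound; exists 0%N.
apply: (@le_lt_trans _ _ B%:E); last exact: ltry.
by apply: ge_ereal_sup => _ [k _ <-]; exact: hv.
Qed.

Lemma main_esup : (limn_esup (fun N : nat =>
      ((N%:R `^ (d%:R^-1))%:E * qerr nrm mu p (first_pts a N))%E) < +oo)%E.
Proof.
have [C hC] := main_bound.
apply: (@esup_bound _ (Num.max C 0)) => N.
case: N => [|N].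
  rewrite powR0; last by rewrite invr_eq0 pnatr_eq0 -lt0n.
  by rewrite mul0e lee_fin le_max lexx orbT.
rewrite (qerr_eq Hn p0 hmom) // -EFinM lee_fin le_max; apply/orP; left.
exact: hC.
Qed.

End Main2.

Theorem theorem3p1 (R : realType) (d : nat) (nrm : d.-tuple R -> R)
    (p : R) (mu : probability (d.-tuple R) R) (a : nat -> d.-tuple R) (b : R) :
  (1 <= d)%N ->
  is_norm nrm ->
  0 < p ->
  (\int[mu]_xi ((nrm xi `^ p)%:E) < +oo)%E ->
  greedy_seq nrm mu p a ->
  0 < b -> b < 2^-1 ->
  (\int[mu]_xi (maxfun nrm mu a b xi `^ (p / (p + d%:R))) < +oo)%E ->
  (limn_esup (fun N : nat =>
      ((N%:R `^ (d%:R^-1))%:E * qerr nrm mu p (first_pts a N))%E) < +oo)%E.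
Proof.
move=> d1 Hn p0 hmom hg b0 b2 hpsi.
exact: (main_esup Hn p0 hmom hg b0 b2 d1 hpsi).
Qed.
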